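(* Let $T\subset\mathbb{R}^d$ ($d\in\{2,3\}$) be a nondegenerate simplex. The set $\{S^i:i\in\mathcal{V}\}$ (if $d=2$), resp. $\{S^i_q:i\in\mathcal{V},\ q=0,1\}$ (if $d=3$), is a basis of $\mathbb{D}$. Moreover, for $i\neq j$, $i,j\in\mathcal{V}$, the normal-tangential components on the facet $F_j$ vanish: $(S^i)_{nt}|_{F_j}=0$ and $(S^i_q)_{nt}|_{F_j}=0$, while on $F_i$ these normal-tangential components do not vanish. When $d=3$ and $i\in\mathcal{V}$, $$t_{i+2,i+3}^T S^i_0 n_i=0,\quad t_{i+1,i+2}^T S^i_0 n_i\neq0,\quad t_{i+3,i+1}^T S^i_0 n_i\neq 0,$$ $$t_{i+2,i+3}^T S^i_1 n_i\neq0,\quad t_{i+1,i+2}^T S^i_1 n_i\neq0,\quad t_{i+3,i+1}^T S^i_1 n_i=0.$$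
   Context: $\mathcal{V}=\{0,1,2\}$ if $d=2$ and $\{0,1,2,3\}$ if $d=3$; $V_i$ ($i\in\mathcal{V}$) are the vertices of $T$, $F_i$ the facet opposite $V_i$, $n_i$ its outward unit normal, $t_{ij}=(V_i-V_j)/|V_i-V_j|$, and $\lambda_i$ the barycentric coordinate equal to $1$ at $V_i$. $\mathbb{D}=\{M\in\mathbb{R}^{d\times d}:\operatorname{tr}M=0\}$, $\operatorname{dev}\tau=\tau-\frac{\operatorname{tr}\tau}{d}I$, $a\otimes b=ab^T$. For $d=2$: $S^i=\operatorname{dev}(\nabla\lambda_{i+1}\otimes\operatorname{curl}\lambda_{i+2})$ with $\operatorname{curl}\phi=(-\partial_2\phi,\partial_1\phi)^T$ and indices mod 3. For $d=3$: $S^i_0=\operatorname{dev}(\nabla\lambda_{i+1}\otimes(\nabla\lambda_{i+2}\times\nabla\lambda_{i+3}))$, $S^i_1=\operatorname{dev}(\nabla\lambda_{i+2}\otimes(\nabla\lambda_{i+3}\times\nabla\lambda_{i+1}))$, indices mod 4 (also for the tangents $t$). For a matrix $\tau$ and a facet with unit normal $n$: $\tau_{nn}=n^T\tau n$, $\tau_{nt}=\tau n-\tau_{nn}n$. *)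

(* Defs.v *)
From HB Require Import structures.
From mathcomp Require Import all_boot all_order all_algebra.
Set Implicit Arguments. Unset Strict Implicit. Unset Printing Implicit Defensive.
Import Order.TTheory GRing.Theory Num.Theory.
Local Open Scope ring_scope.

Section Defs.
Variable R : rcfType.

Definition dotv d (a b : 'cV[R]_d) : R := (a^T *m b) 0 0.
Definition normv d (a : 'cV[R]_d) : R := Num.sqrt (dotv a a).

Definition tens d (a b : 'cV[R]_d) : 'M[R]_d := a *m b^T.

Definition devm d (tau : 'M[R]_d) : 'M[R]_d := tau - (\tr tau / d%:R) *: 1%:M.

Definition sh n (i : 'I_n.+1) (k : nat) : 'I_n.+1 := inZp (i + k).

Definition vmx d (V : 'I_d.+1 -> 'cV[R]_d) : 'M[R]_d.+1 :=
  \matrix_(j < d.+1) (row_mx (1 : 'rV[R]_1) (V j)^T).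

Definition nondeg_simplex d (V : 'I_d.+1 -> 'cV[R]_d) : Prop := \det (vmx V) != 0.

(* Barycentric coordinates: lambda(x) is the unique row vector with
   sum_j lambda_j = 1 and sum_j lambda_j V_j = x, i.e. [1, x^T] = lambda * vmx V. *)
Definition bary d (V : 'I_d.+1 -> 'cV[R]_d) (i : 'I_d.+1) (x : 'cV[R]_d) : R :=
  (row_mx (1 : 'rV[R]_1) x^T *m invmx (vmx V)) 0 i.

(* Gradient of the affine function bary V i: its (constant) linear part. *)
Definition grad d (V : 'I_d.+1 -> 'cV[R]_d) (i : 'I_d.+1) : 'cV[R]_d :=
  \col_(k < d) invmx (vmx V) (rshift 1 k) i.

Definition curl2 (V : 'I_3 -> 'cV[R]_2) (i : 'I_3) : 'cV[R]_2 :=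
  let g := grad V i in \col_(k < 2) (if k == 0 :> nat then - g 1 0 else g 0 0).

Definition cross (a b : 'cV[R]_3) : 'cV[R]_3 :=
  \col_(k < 3)
    (if k == 0 :> nat then a 1 0 * b 2 0 - a 2 0 * b 1 0
     else if k == 1 :> nat then a 2 0 * b 0 0 - a 0 0 * b 2 0
     else a 0 0 * b 1 0 - a 1 0 * b 0 0).

Definition S2 (V : 'I_3 -> 'cV[R]_2) (i : 'I_3) : 'M[R]_2 :=
  devm (tens (grad V (sh i 1)) (curl2 V (sh i 2))).

(* S^i_0 and S^i_1 (d = 3) ; q = false is S_0, q = true is S_1 *)
Definition S3 (V : 'I_4 -> 'cV[R]_3) (i : 'I_4) (q : bool) : 'M[R]_3 :=
  if ~~ q then
    devm (tens (grad V (sh i 1)) (cross (grad V (sh i 2)) (grad V (sh i 3))))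
  else
    devm (tens (grad V (sh i 2)) (cross (grad V (sh i 3)) (grad V (sh i 1)))).

Definition outward_unit_normal d (V : 'I_d.+1 -> 'cV[R]_d) (i : 'I_d.+1)
  (n : 'cV[R]_d) : Prop :=
  [/\ normv n = 1,
      (forall j k, j != i -> k != i -> dotv n (V j - V k) = 0)
    & (forall j, j != i -> dotv n (V i - V j) < 0)].

Definition tang d (V : 'I_d.+1 -> 'cV[R]_d) (i j : 'I_d.+1) : 'cV[R]_d :=
  (normv (V i - V j))^-1 *: (V i - V j).

Definition comp_nn d (tau : 'M[R]_d) (n : 'cV[R]_d) : R := dotv n (tau *m n).
Definition comp_nt d (tau : 'M[R]_d) (n : 'cV[R]_d) : 'cV[R]_d :=
  tau *m n - comp_nn tau n *: n.

(* D = trace-free matrices; B is a basis of D (family indexed by a finType) *)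
Definition is_basis_of_dev d (I : finType) (B : I -> 'M[R]_d) : Prop :=
  [/\ (forall k, \tr (B k) = 0),
      (forall c : I -> R, \sum_k c k *: B k = 0 -> forall k, c k = 0)
    & (forall M : 'M[R]_d, \tr M = 0 -> exists c : I -> R, M = \sum_k c k *: B k)].

End Defs.

(* Main.v *)
Require Import Defs.
From HB Require Import structures.
From mathcomp Require Import all_boot all_order all_algebra.
From mathcomp Require Import ring.
Set Implicit Arguments. Unset Strict Implicit. Unset Printing Implicit Defensive.
Import Order.TTheory GRing.Theory Num.Theory.
Local Open Scope ring_scope.

Section Geo.
Variable R : rcfType.
Implicit Types d : nat.

Lemma dotvE d (a b : 'cV[R]_d) : dotv a b = \sum_k a k 0 * b k 0.
Proof. by rewrite /dotv !mxE; apply: eq_bigr => k _; rewrite mxE. Qed.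

Lemma dotvC d (a b : 'cV[R]_d) : dotv a b = dotv b a.
Proof. by rewrite !dotvE; apply: eq_bigr => k _; rewrite mulrC. Qed.

Lemma dotvDr d (a b c : 'cV[R]_d) : dotv a (b + c) = dotv a b + dotv a c.
Proof. by rewrite !dotvE -big_split; apply: eq_bigr => k _; rewrite mxE mulrDr. Qed.

Lemma dotvNr d (a b : 'cV[R]_d) : dotv a (- b) = - dotv a b.
Proof. by rewrite !dotvE -sumrN; apply: eq_bigr => k _; rewrite mxE mulrN. Qed.

Lemma dotvBr d (a b c : 'cV[R]_d) : dotv a (b - c) = dotv a b - dotv a c.
Proof. by rewrite dotvDr dotvNr. Qed.

Lemma dotvZr d (a b : 'cV[R]_d) x : dotv a (x *: b) = x * dotv a b.
Proof. by rewrite !dotvE mulr_sumr; apply: eq_bigr => k _; rewrite mxE mulrCA. Qed.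

Lemma dotvDl d (a b c : 'cV[R]_d) : dotv (b + c) a = dotv b a + dotv c a.
Proof. by rewrite dotvC dotvDr !(dotvC a). Qed.
Lemma dotvBl d (a b c : 'cV[R]_d) : dotv (b - c) a = dotv b a - dotv c a.
Proof. by rewrite dotvC dotvBr !(dotvC a). Qed.
Lemma dotvZl d (a b : 'cV[R]_d) x : dotv (x *: b) a = x * dotv b a.
Proof. by rewrite dotvC dotvZr dotvC. Qed.
Lemma dotv0r d (a : 'cV[R]_d) : dotv a 0 = 0.
Proof. by rewrite dotvE big1 // => k _; rewrite mxE mulr0. Qed.

Lemma dotv_ge0 d (a : 'cV[R]_d) : 0 <= dotv a a.
Proof. by rewrite dotvE sumr_ge0 // => k _; rewrite -expr2 sqr_ge0. Qed.

Lemma dotv_eq0 d (a : 'cV[R]_d) : dotv a a = 0 -> a = 0.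
Proof.
rewrite dotvE => /psumr_eq0P H; apply/matrixP => k l; rewrite (ord1 l) mxE.
by apply/eqP; rewrite -sqrf_eq0 expr2 H // => ? _; rewrite -expr2 sqr_ge0.
Qed.

Lemma normv1 d (a : 'cV[R]_d) : normv a = 1 -> dotv a a = 1.
Proof. by move=> H; rewrite -(sqr_sqrtr (dotv_ge0 a)) -/(normv a) H expr1n. Qed.

Lemma normv_neq0 d (a : 'cV[R]_d) : a != 0 -> normv a != 0.
Proof.
move=> Ha; rewrite /normv sqrtr_eq0 -ltNge lt_def dotv_ge0 andbT.
by apply: contra Ha => /eqP/dotv_eq0 ->.
Qed.

Lemma tens_mul d (a b v : 'cV[R]_d) : tens a b *m v = dotv b v *: a.
Proof.
rewrite /tens -mulmxA [b^T *m v]mx11_scalar -/(dotv b v).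
by rewrite mul_mx_scalar.
Qed.

Lemma devm_mul d (X : 'M[R]_d) (v : 'cV[R]_d) : devm X *m v = X *m v - (\tr X / d%:R) *: v.
Proof. by rewrite /devm mulmxBl -scalemxAl mul1mx. Qed.

Lemma comp_nt_dev d (a b n : 'cV[R]_d) : dotv n n = 1 ->
  comp_nt (devm (tens a b)) n = dotv b n *: (a - dotv a n *: n).
Proof.
move=> hn; rewrite /comp_nt /comp_nn devm_mul tens_mul.
rewrite dotvBr !dotvZr hn mulr1 (dotvC n a).
rewrite scalerBr scalerA scalerBl.
set s := _ / _; set x := dotv b n; set y := dotv a n.
by rewrite opprB addrA subrK.
Qed.

Lemma dot_dev d (a b n t : 'cV[R]_d) : dotv t n = 0 ->
  dotv t (devm (tens a b) *m n) = dotv b n * dotv t a.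
Proof. by move=> h; rewrite devm_mul tens_mul dotvBr !dotvZr h mulr0 subr0. Qed.

Lemma dot_comp_nt d (X : 'M[R]_d) (n t : 'cV[R]_d) : dotv t n = 0 ->
  dotv t (comp_nt X n) = dotv t (X *m n).
Proof. by move=> h; rewrite /comp_nt dotvBr dotvZr h mulr0 subr0. Qed.

Lemma comp_nt_sum d (I : finType) (c : I -> R) (B : I -> 'M[R]_d) n :
  comp_nt (\sum_k c k *: B k) n = \sum_k c k *: comp_nt (B k) n.
Proof.
elim/big_rec2: _ => [|k y1 y2 _ <-].
  by rewrite /comp_nt /comp_nn mul0mx dotv0r scale0r subr0.
rewrite /comp_nt /comp_nn mulmxDl -scalemxAl dotvDr dotvZr scalerBr scalerDl scalerA.
by rewrite addrACA opprD.
Qed.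

Lemma dotv_sum d (I : finType) (c : I -> R) (v : I -> 'cV[R]_d) t :
  dotv t (\sum_k c k *: v k) = \sum_k c k * dotv t (v k).
Proof.
elim/big_rec2: _ => [|k y1 y2 _ <-]; first by rewrite dotv0r.
by rewrite dotvDr dotvZr.
Qed.

End Geo.

Section Simp.
Variable R : rcfType.

Lemma vmx_unit d (V : 'I_d.+1 -> 'cV[R]_d) : nondeg_simplex V -> vmx V \in unitmx.
Proof. by rewrite unitmxE unitfE. Qed.

Lemma lift0_rshift d (c : 'I_d) : lift ord0 c = rshift 1 c :> 'I_d.+1.
Proof. by apply: val_inj. Qed.
Lemma ord0_lshift d : (ord0 : 'I_d.+1) = lshift d (ord0 : 'I_1).
Proof. by apply: val_inj. Qed.

Lemma vmx0 d (V : 'I_d.+1 -> 'cV[R]_d) a : vmx V a ord0 = 1.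
Proof. by rewrite /vmx mxE ord0_lshift row_mxEl mxE. Qed.
Lemma vmxS d (V : 'I_d.+1 -> 'cV[R]_d) a c : vmx V a (lift ord0 c) = V a c 0.
Proof. by rewrite /vmx mxE lift0_rshift row_mxEr mxE. Qed.

Lemma grad_row d (V : 'I_d.+1 -> 'cV[R]_d) a k : nondeg_simplex V ->
  invmx (vmx V) ord0 k + dotv (grad V k) (V a) = (a == k)%:R.
Proof.
move=> nd; have := congr1 (fun M : 'M[R]_d.+1 => M a k) (mulmxV (vmx_unit nd)).
rewrite /= !mxE big_ord_recl vmx0 mul1r => <-; congr (_ + _).
rewrite dotvE; apply: eq_bigr => c _; rewrite vmxS /grad mxE mulrC.
by rewrite lift0_rshift.
Qed.

Lemma grad_edge d (V : 'I_d.+1 -> 'cV[R]_d) k a b : nondeg_simplex V ->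
  dotv (grad V k) (V a - V b) = (a == k)%:R - (b == k)%:R.
Proof.
move=> nd; rewrite dotvBr -(grad_row a k nd) -(grad_row b k nd).
by rewrite opprD addrACA subrr add0r.
Qed.

Lemma orth_zero d (V : 'I_d.+1 -> 'cV[R]_d) i (w : 'cV[R]_d) : nondeg_simplex V ->
  (forall a, dotv w (V a - V i) = 0) -> w = 0.
Proof.
move=> nd hw.
pose u : 'cV[R]_d.+1 := \col_(c < d.+1) (if unlift ord0 c is Some c' then w c' 0 else - dotv w (V i)).
have Hu : vmx V *m u = 0.
  apply/matrixP => a l; rewrite (ord1 l) !mxE big_ord_recl vmx0 mxE unlift_none mul1r.
  rewrite -[RHS](hw a) dotvBr addrC (dotvC w); congr (_ + _).
  rewrite dotvE; apply: eq_bigr => c _; rewrite vmxS mxE liftK.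
  by rewrite mulrC.
have u0 : u = 0 by rewrite -(mulKmx (vmx_unit nd) u) Hu mulmx0.
apply/matrixP => c l; rewrite (ord1 l).
have := congr1 (fun M : 'cV[R]_d.+1 => M (lift ord0 c) 0) u0.
by rewrite !mxE liftK.
Qed.

Lemma normal_grad d (V : 'I_d.+2 -> 'cV[R]_d.+1) i n : nondeg_simplex V ->
  outward_unit_normal V i n ->
  exists2 c, c != 0 & n = c *: grad V i.
Proof.
move=> nd [n1 hort _]; set a0 := lift i ord0.
have a0i : a0 != i by rewrite /a0 eq_sym neq_lift.
set m := dotv n (V a0 - V i).
have E : n + m *: grad V i = 0.
  apply: (orth_zero (i := i) nd) => a.
  rewrite dotvDl dotvZl grad_edge // eqxx.
  have [->|ai] := eqVneq a i; first by rewrite subrr dotv0r subrr mulr0 addr0.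
  rewrite sub0r mulrN1.
  have -> : V a - V i = (V a - V a0) + (V a0 - V i) by rewrite addrA subrK.
  by rewrite dotvDr hort // add0r subrr.
exists (- m); last by apply/eqP; rewrite scaleNr -addr_eq0 E.
rewrite oppr_eq0; apply/eqP => m0.
move: E; rewrite m0 scale0r addr0 => n0.
by have := normv1 n1; rewrite n0 dotv0r => /eqP; rewrite eq_sym oner_eq0.
Qed.

End Simp.

Section Conc.
Variable R : rcfType.

Lemma dot2E (a b : 'cV[R]_2) : dotv a b = a 0 0 * b 0 0 + a 1 0 * b 1 0.
Proof.
rewrite dotvE !big_ord_recl big_ord0 addr0.
by congr (_ * _ + _ * _); congr (_ _ 0); apply: val_inj.
Qed.

Lemma dot3E (a b : 'cV[R]_3) :
  dotv a b = a 0 0 * b 0 0 + a 1 0 * b 1 0 + a 2 0 * b 2 0.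
Proof.
rewrite dotvE !big_ord_recl big_ord0 addr0 addrA.
by congr (_ * _ + _ * _ + _ * _); congr (_ _ 0); apply: val_inj.
Qed.

Definition cu (p : 'cV[R]_2) : 'cV[R]_2 :=
  \col_(k < 2) (if k == 0 :> nat then - p 1 0 else p 0 0).

Lemma curl2_cu V k : curl2 V k = cu (grad V k).
Proof. by []. Qed.

Lemma cu_self p : dotv (cu p) p = 0.
Proof. rewrite dot2E !mxE /=; ring. Qed.

Lemma cu_det (p q e f : 'cV[R]_2) :
  dotv (cu p) q * (e 0 0 * f 1 0 - e 1 0 * f 0 0) =
  dotv p e * dotv q f - dotv p f * dotv q e.
Proof. rewrite !dot2E !mxE /=; ring. Qed.

Lemma cross_l (b c : 'cV[R]_3) : dotv (cross b c) b = 0.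
Proof. rewrite dot3E !mxE /=; ring. Qed.
Lemma cross_r (b c : 'cV[R]_3) : dotv (cross b c) c = 0.
Proof. rewrite dot3E !mxE /=; ring. Qed.

Lemma cross_det (a b c e f h : 'cV[R]_3) :
  dotv (cross b c) a * dotv (cross e f) h =
  dotv a e * (dotv b f * dotv c h - dotv b h * dotv c f)
  - dotv a f * (dotv b e * dotv c h - dotv b h * dotv c e)
  + dotv a h * (dotv b e * dotv c f - dotv b f * dotv c e).
Proof. rewrite !dot3E !mxE /=; ring. Qed.

End Conc.
Section Span.
Variable R : numFieldType.

Lemma sum_reidx (I : finType) (V : nmodType) (F : I -> V) :
  \sum_k F k = \sum_(i < #|I|) F (@enum_val I (pred_of_argType I) i).
Proof. by rewrite (reindex (@enum_val I predT)) //; exists enum_rank => x _; [apply: enum_valK|apply: enum_rankK]. Qed.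

Lemma span_dev d (I : finType) (B : I -> 'M[R]_d.+1) :
  #|I| = (d.+1 * d.+1).-1 ->
  (forall k, \tr (B k) = 0) ->
  (forall c : I -> R, \sum_k c k *: B k = 0 -> forall k, c k = 0) ->
  forall M : 'M[R]_d.+1, \tr M = 0 -> exists c : I -> R, M = \sum_k c k *: B k.
Proof.
move=> cardI trB indB M trM.
pose Xs := [tuple B (@enum_val I (pred_of_argType I) i) | i < #|I|].
pose X := [tuple of (1%:M : 'M[R]_d.+1) :: Xs].
have XS (i : 'I_#|I|) : X`_(lift ord0 i) = B (enum_val i).
  rewrite (_ : X`_(lift ord0 i) = tnth X (lift ord0 i)); last by rewrite (tnth_nth 0).
  rewrite (tnthS (1%:M : 'M[R]_d.+1) Xs i) tnth_mktuple //.
have X0 : X`_0 = (1%:M : 'M[R]_d.+1) by [].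
have frX : free X.
  apply/freeP => k; rewrite big_ord_recl X0.
  under eq_bigr do rewrite XS.
  move=> H.
  have k0 : k ord0 = 0.
    have := congr1 mxtrace H; rewrite mxtraceD mxtrace0 mxtraceZ mxtrace1 (big_morph _ (@mxtraceD _ _) (@mxtrace0 _ _)).
    under eq_bigr do rewrite mxtraceZ trB mulr0.
    by rewrite big1 // addr0 => /eqP; rewrite mulf_eq0 pnatr_eq0 orbF => /eqP.
  move: H; rewrite k0 scale0r add0r => H.
  have Hc := indB (fun x => k (lift ord0 (enum_rank x))).
  have {}Hc : forall x, k (lift ord0 (enum_rank x)) = 0.
    apply: Hc; rewrite sum_reidx -[RHS]H; apply: eq_bigr => i _; by rewrite enum_valK.
  move=> i; case: (unliftP ord0 i) => [j ->|->] //.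
  by rewrite -(enum_valK j); apply: Hc.
have bX : basis_of fullv X.
  rewrite basisEfree frX subvf /= dimvf /dim /= size_tuple.
  by rewrite cardI card_ord prednK ?muln_gt0.
have MX : M \in <<X>>%VS by rewrite (span_basis bX) memvf.
have := coord_span MX; rewrite big_ord_recl X0.
under eq_bigr do rewrite XS.
move=> HM.
have c0 : coord X ord0 M = 0.
  have := congr1 mxtrace HM; rewrite trM mxtraceD mxtraceZ mxtrace1 (big_morph _ (@mxtraceD _ _) (@mxtrace0 _ _)).
  under eq_bigr do rewrite mxtraceZ trB mulr0.
  by rewrite big1 // addr0 => /esym/eqP; rewrite mulf_eq0 pnatr_eq0 orbF => /eqP.
exists (fun x => coord X (lift ord0 (enum_rank x)) M).
rewrite {1}HM c0 scale0r add0r [RHS]sum_reidx.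
apply: eq_bigr => i _. congr (coord _ (lift _ _) _ *: _). exact (esym (enum_valK i)).
Qed.
End Span.
Lemma sh3 (i : 'I_3) : [/\ sh i 1 != i, sh i 2 != i & sh i 1 != sh i 2].
Proof. by case: i => [[|[|[|i]]] Hi]. Qed.
Lemma sh3j (i j : 'I_3) : j != i -> (j == sh i 1) || (j == sh i 2).
Proof. by case: i => [[|[|[|i]]] Hi] //; case: j => [[|[|[|j]]] Hj]. Qed.
Lemma sh4 (i : 'I_4) : [/\ sh i 1 != i, sh i 2 != i & sh i 3 != i].
Proof. by case: i => [[|[|[|[|i]]]] Hi]. Qed.
Lemma sh4' (i : 'I_4) : [/\ sh i 1 != sh i 2, sh i 2 != sh i 3 & sh i 3 != sh i 1].
Proof. by case: i => [[|[|[|[|i]]]] Hi]. Qed.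
Lemma sh4j (i j : 'I_4) : j != i -> [|| j == sh i 1, j == sh i 2 | j == sh i 3].
Proof. by case: i => [[|[|[|[|i]]]] Hi] //; case: j => [[|[|[|[|j]]]] Hj]. Qed.

Section Main.
Variable R : rcfType.

Lemma par_zero d (g n : 'cV[R]_d) c : n = c *: g -> dotv n n = 1 ->
  g - dotv g n *: n = 0.
Proof.
move=> -> h; move: h; rewrite dotvZl (dotvZr g g c) scalerA => h.
by rewrite mulrC h scale1r subrr.
Qed.

Lemma tr_devm d (X : 'M[R]_d.+1) : \tr (devm X) = 0.
Proof.
rewrite /devm mxtraceD raddfN /= mxtraceZ mxtrace1 divfK ?subrr //.
by rewrite pnatr_eq0.
Qed.

Lemma comp_nt0 d (n : 'cV[R]_d) : comp_nt 0 n = 0.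
Proof. by rewrite /comp_nt /comp_nn mul0mx dotv0r scale0r subr0. Qed.

Lemma dot_tang d (V : 'I_d.+1 -> 'cV[R]_d) x y v : nondeg_simplex V -> x != y ->
  dotv (tang V x y) v = (normv (V x - V y))^-1 * dotv (V x - V y) v /\
  (normv (V x - V y))^-1 != 0.
Proof.
move=> nd xy; split; first by rewrite /tang dotvZl.
rewrite invr_eq0 normv_neq0 //; apply/eqP => E.
by have := grad_edge x x y nd; rewrite E dotv0r eqxx eq_sym (negPf xy) subr0 => /eqP; rewrite eq_sym oner_eq0.
Qed.

Theorem part2 (V : 'I_3 -> 'cV[R]_2) (n : 'I_3 -> 'cV[R]_2) :
     nondeg_simplex V -> (forall i, outward_unit_normal V i (n i)) ->
     [/\ is_basis_of_dev (S2 V),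
         (forall i j, i != j -> comp_nt (S2 V i) (n j) = 0)
       & (forall i, comp_nt (S2 V i) (n i) != 0)].
Proof.
move=> nd hn.
have nn j : dotv (n j) (n j) = 1 by case: (hn j) => /normv1.
have horth j x y : x != j -> y != j -> dotv (n j) (V x - V y) = 0.
  by case: (hn j) => _ H _; apply: H.
have pa : forall i j, i != j -> comp_nt (S2 V i) (n j) = 0.
  move=> i j ij; rewrite /S2 comp_nt_dev //.
  have [c _ nj] := normal_grad nd (hn j).
  have ji : j != i by rewrite eq_sym.
  case/orP: (sh3j ji) => /eqP Ej.
    by subst j; rewrite (par_zero nj (nn _)) scaler0.
  by subst j; rewrite nj (dotvZr (curl2 V (sh i 2)) (grad V (sh i 2)) c) curl2_cu cu_self mulr0 scale0r.
have pb : forall i, comp_nt (S2 V i) (n i) != 0.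
  move=> i; case: (sh3 i) => h1 h2 h12.
  have [c c0 ni] := normal_grad nd (hn i).
  set t := V (sh i 1) - V (sh i 2).
  have ht : dotv t (n i) = 0 by rewrite dotvC horth.
  apply/eqP => H0; have := congr1 (dotv t) H0.
  rewrite dot_comp_nt // /S2 dot_dev // dotv0r (dotvC t) /t grad_edge // eqxx.
  rewrite eq_sym (negPf h12) subr0 mulr1 ni (dotvZr (curl2 V (sh i 2)) (grad V i) c) curl2_cu => /eqP.
  rewrite mulf_eq0 (negPf c0) /= => /eqP H.
  have := cu_det (grad V (sh i 2)) (grad V i) (V (sh i 2) - V (sh i 1)) (V i - V (sh i 1)).
  have h2' : (i == sh i 2) = false by rewrite eq_sym (negPf h2).
  rewrite H mul0r !grad_edge // !eqxx !(negPf h12) (negPf h1) (negPf h2) h2'.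
  by move/eqP; rewrite !subr0 mul0r subr0 mulr1 eq_sym oner_eq0.
split => //; split.
- by move=> k; rewrite tr_devm.
- move=> c H j; have := congr1 (fun X => comp_nt X (n j)) H.
  rewrite /= comp_nt_sum comp_nt0 (bigD1 j) //= big1 ?addr0.
    by move/eqP; rewrite scaler_eq0 (negPf (pb j)) orbF => /eqP.
  by move=> k kj; rewrite pa // scaler0.
- apply: span_dev; first by rewrite card_ord.
  + by move=> k; rewrite tr_devm.
  + move=> c H j; have := congr1 (fun X => comp_nt X (n j)) H.
    rewrite /= comp_nt_sum comp_nt0 (bigD1 j) //= big1 ?addr0.
      by move/eqP; rewrite scaler_eq0 (negPf (pb j)) orbF => /eqP.
    by move=> k kj; rewrite pa // scaler0.
Qed.
End Main.

Lemma sh4ne (i : 'I_4) :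
  ((sh i 1 == i) = false) * ((i == sh i 1) = false) *
  ((sh i 2 == i) = false) * ((i == sh i 2) = false) *
  ((sh i 3 == i) = false) * ((i == sh i 3) = false) *
  ((sh i 1 == sh i 2) = false) * ((sh i 2 == sh i 1) = false) *
  ((sh i 2 == sh i 3) = false) * ((sh i 3 == sh i 2) = false) *
  ((sh i 3 == sh i 1) = false) * ((sh i 1 == sh i 3) = false).
Proof. by case: i => [[|[|[|[|i]]]] Hi]. Qed.

Section Main3.
Variable R : rcfType.

Lemma tang_n d (V : 'I_d.+1 -> 'cV[R]_d) i n x y :
  outward_unit_normal V i n -> x != i -> y != i ->
  dotv (tang V x y) n = 0.
Proof.
by case=> _ H _ xi yi; rewrite /tang dotvZl dotvC H // mulr0.
Qed.

Lemma tang_dev d (V : 'I_d.+1 -> 'cV[R]_d) i n x y k b :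
  nondeg_simplex V -> outward_unit_normal V i n -> x != i -> y != i ->
  dotv (tang V x y) (devm (tens (grad V k) b) *m n) =
  dotv b n * ((normv (V x - V y))^-1 * ((x == k)%:R - (y == k)%:R)).
Proof.
move=> nd hn xi yi; rewrite dot_dev ?(tang_n hn) //; congr (_ * _).
by rewrite /tang dotvZl dotvC grad_edge.
Qed.

Lemma sum_pair (c : 'I_4 * bool -> R) (f : 'I_4 * bool -> R) j :
  (forall p, p.1 != j -> f p = 0) ->
  \sum_p c p * f p = c (j,false) * f (j,false) + c (j,true) * f (j,true).
Proof.
move=> hf; rewrite (bigD1 (j,false)) // (bigD1 (j,true)) ?big1 ?addr0 //; last by rewrite /= xpair_eqE eqxx.
  by rewrite /= addr0.
move=> [k b] /= /andP[h1 h2]; case: (eqVneq k j) => [ekj|kj]; last by rewrite hf // mulr0.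
by subst k; case: b h1 h2; rewrite eqxx.
Qed.

Theorem part3 (V : 'I_4 -> 'cV[R]_3) (n : 'I_4 -> 'cV[R]_3) :
     nondeg_simplex V -> (forall i, outward_unit_normal V i (n i)) ->
     [/\ is_basis_of_dev (fun p : 'I_4 * bool => S3 V p.1 p.2),
         (forall i j q, i != j -> comp_nt (S3 V i q) (n j) = 0),
         (forall i q, comp_nt (S3 V i q) (n i) != 0)
       & (forall i,
           [/\ dotv (tang V (sh i 2) (sh i 3)) (S3 V i false *m n i) = 0,
                dotv (tang V (sh i 1) (sh i 2)) (S3 V i false *m n i) != 0
              & dotv (tang V (sh i 3) (sh i 1)) (S3 V i false *m n i) != 0] /\
           [/\ dotv (tang V (sh i 2) (sh i 3)) (S3 V i true *m n i) != 0,
                dotv (tang V (sh i 1) (sh i 2)) (S3 V i true *m n i) != 0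
              & dotv (tang V (sh i 3) (sh i 1)) (S3 V i true *m n i) = 0])].
Proof.
move=> nd hn.
have nn j : dotv (n j) (n j) = 1 by case: (hn j) => /normv1.
have pa : forall i j q, i != j -> comp_nt (S3 V i q) (n j) = 0.
  move=> i j q ij; have ji : j != i by rewrite eq_sym.
  have [c _ nj] := normal_grad nd (hn j).
  rewrite /S3; case: q => /=; rewrite comp_nt_dev //.
    case/or3P: (sh4j ji) => /eqP Ej; subst j.
    - by rewrite nj (dotvZr _ (grad V (sh i 1)) c) cross_r mulr0 scale0r.
    - by rewrite (par_zero nj (nn _)) scaler0.
    - by rewrite nj (dotvZr _ (grad V (sh i 3)) c) cross_l mulr0 scale0r.
  case/or3P: (sh4j ji) => /eqP Ej; subst j.
  - by rewrite (par_zero nj (nn _)) scaler0.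
  - by rewrite nj (dotvZr _ (grad V (sh i 2)) c) cross_l mulr0 scale0r.
  - by rewrite nj (dotvZr _ (grad V (sh i 3)) c) cross_r mulr0 scale0r.
have bn0 : forall i, dotv (cross (grad V (sh i 2)) (grad V (sh i 3))) (n i) != 0.
  move=> i; have [c c0 ni] := normal_grad nd (hn i).
  rewrite ni (dotvZr _ (grad V i) c) mulf_eq0 (negPf c0) /=; apply/eqP => H.
  have := cross_det (grad V i) (grad V (sh i 2)) (grad V (sh i 3))
     (V i - V (sh i 1)) (V (sh i 2) - V (sh i 1)) (V (sh i 3) - V (sh i 1)).
  rewrite H mul0r !grad_edge // !eqxx !sh4ne.
  by move/eqP; rewrite !subr0 !mul0r !subr0 !mulr1 addr0 eq_sym oner_eq0.
have bn1 : forall i, dotv (cross (grad V (sh i 3)) (grad V (sh i 1))) (n i) != 0.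
  move=> i; have [c c0 ni] := normal_grad nd (hn i).
  rewrite ni (dotvZr _ (grad V i) c) mulf_eq0 (negPf c0) /=; apply/eqP => H.
  have := cross_det (grad V i) (grad V (sh i 3)) (grad V (sh i 1))
     (V i - V (sh i 2)) (V (sh i 3) - V (sh i 2)) (V (sh i 1) - V (sh i 2)).
  rewrite H mul0r !grad_edge // !eqxx !sh4ne.
  by move/eqP; rewrite !subr0 !mul0r !subr0 !mulr1 addr0 eq_sym oner_eq0.
have pd : forall i,
           [/\ dotv (tang V (sh i 2) (sh i 3)) (S3 V i false *m n i) = 0,
                dotv (tang V (sh i 1) (sh i 2)) (S3 V i false *m n i) != 0
              & dotv (tang V (sh i 3) (sh i 1)) (S3 V i false *m n i) != 0] /\
           [/\ dotv (tang V (sh i 2) (sh i 3)) (S3 V i true *m n i) != 0,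
                dotv (tang V (sh i 1) (sh i 2)) (S3 V i true *m n i) != 0
              & dotv (tang V (sh i 3) (sh i 1)) (S3 V i true *m n i) = 0].
  move=> i; case: (sh4 i) => h1 h2 h3; case: (sh4' i) => h12 h23 h31.
  have r12 := (dot_tang 0 nd h12).2; have r23 := (dot_tang 0 nd h23).2.
  have r31 := (dot_tang 0 nd h31).2.
  rewrite /S3 /=; rewrite !(tang_dev _ _ nd (hn i)) // !eqxx !sh4ne.
  have T1 : (true%:R : R) = 1 by exact: mulr1n.
  rewrite !subr0 !sub0r !mulr0 !T1 ?mulrN1 ?mulr1 ?mulrN ?oppr_eq0; split; split => //; exact: mulf_neq0.
have pb : forall i q, comp_nt (S3 V i q) (n i) != 0.
  move=> i q; case: (sh4 i) => h1 h2 h3.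
  apply/eqP => H; have := congr1 (dotv (tang V (sh i 1) (sh i 2))) H.
  rewrite dot_comp_nt ?(tang_n (hn i)) // dotv0r; clear H.
  by case: q; case: (pd i) => [[_ ? _] [_ ? _]]; apply/eqP.
have indep : forall c : 'I_4 * bool -> R,
    \sum_k c k *: S3 V k.1 k.2 = 0 -> forall k, c k = 0.
  move=> c H.
  have E t j : dotv t (n j) = 0 ->
     c (j,false) * dotv t (S3 V j false *m n j) + c (j,true) * dotv t (S3 V j true *m n j) = 0.
    move=> tn.
    have L : dotv t (comp_nt (\sum_k c k *: S3 V k.1 k.2) (n j)) =
       \sum_p c p * dotv t (comp_nt (S3 V p.1 p.2) (n j)).
      by rewrite comp_nt_sum dotv_sum.
    rewrite H comp_nt0 dotv0r in L.
    rewrite (@sum_pair c (fun p => dotv t (comp_nt (S3 V p.1 p.2) (n j))) j) in L; last first.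
      by move=> [k b] kj; rewrite pa // dotv0r.
    rewrite -(dot_comp_nt (S3 V j false) tn) -(dot_comp_nt (S3 V j true) tn).
    cbv beta in L; exact (esym L).
  move=> [j q]; case: (sh4 j) => h1 h2 h3.
  case: (pd j) => [[z1 nz1 _] [nz2 _ _]].
  have := E _ j (tang_n (hn j) h2 h3); rewrite z1 mulr0 add0r => /eqP.
  rewrite mulf_eq0 (negPf nz2) orbF => /eqP ct.
  case: q => //.
  have := E _ j (tang_n (hn j) h1 h2); rewrite ct mul0r addr0 => /eqP.
  by rewrite mulf_eq0 (negPf nz1) orbF => /eqP.
split => //; split => //.
- by move=> k; rewrite /S3; case: ifP => _; rewrite tr_devm.
- apply: span_dev => //; first by rewrite card_prod !card_ord card_bool.
  by move=> k; rewrite /S3; case: ifP => _; rewrite tr_devm.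
Qed.

End Main3.

Unset Implicit Arguments.

Theorem lemma5p1 (R : rcfType) :
  (* d = 2 *)
  (forall (V : 'I_3 -> 'cV[R]_2) (n : 'I_3 -> 'cV[R]_2),
     nondeg_simplex V -> (forall i, outward_unit_normal V i (n i)) ->
     [/\ is_basis_of_dev (S2 V),
         (forall i j, i != j -> comp_nt (S2 V i) (n j) = 0)
       & (forall i, comp_nt (S2 V i) (n i) != 0)]) /\
  (* d = 3 *)
  (forall (V : 'I_4 -> 'cV[R]_3) (n : 'I_4 -> 'cV[R]_3),
     nondeg_simplex V -> (forall i, outward_unit_normal V i (n i)) ->
     [/\ is_basis_of_dev (fun p : 'I_4 * bool => S3 V p.1 p.2),
         (forall i j q, i != j -> comp_nt (S3 V i q) (n j) = 0),
         (forall i q, comp_nt (S3 V i q) (n i) != 0)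
       & (forall i,
           [/\ dotv (tang V (sh i 2) (sh i 3)) (S3 V i false *m n i) = 0,
                dotv (tang V (sh i 1) (sh i 2)) (S3 V i false *m n i) != 0
              & dotv (tang V (sh i 3) (sh i 1)) (S3 V i false *m n i) != 0] /\
           [/\ dotv (tang V (sh i 2) (sh i 3)) (S3 V i true *m n i) != 0,
                dotv (tang V (sh i 1) (sh i 2)) (S3 V i true *m n i) != 0
              & dotv (tang V (sh i 3) (sh i 1)) (S3 V i true *m n i) = 0])]).
Proof.
split; [exact: part2 | exact: part3].
Qed.
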